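(* Let $0<\alpha\le 5\pi/6$. Let $E^{nr}_\alpha\subseteq E_\alpha$ be the set of edges of $E_\alpha$ that are not redundant. Then for all $u,v\in V$: $u$ and $v$ are connected in $(V,E^{nr}_\alpha)$ if and only if they are connected in $G_R$. More precisely, for every redundant edge $\{u,v\}\in E_\alpha$ there is a path from $u$ to $v$ consisting only of edges in $E^{nr}_\alpha$.
   Context: Let $V$ be a finite set of pairwise distinct points (nodes) in the Euclidean plane, $d$ the Euclidean distance, and $R>0$. Let $G_R=(V,E)$ be the undirected graph with $E=\{\{u,v\}: u\neq v,\ d(u,v)\le R\}$. Fix a finite increasing sequence of radius levels $0<r_1<r_2<\dots<r_k=R$. For $u\in V$ and $1\le i\le k$ let $S_i(u)=\{v\in V\setminus\{u\}: d(u,v)\le r_i\}$. For $0<\alpha<2\pi$, a closed cone of width $\alpha$ with apex $u$ is a set $\{u+t(\cos\varphi,\sin\varphi): t\ge 0,\ \varphi\in[\theta-\alpha/2,\theta+\alpha/2]\}$ for some $\theta$. A finite set $S\subseteq V\setminus\{u\}$ has an $\alpha$-gap (at $u$) if some closed cone of width $\alpha$ with apex $u$ contains no node of $S$ (in particular $\emptyset$ has an $\alpha$-gap). The algorithm CBTC($\alpha$) assigns to each $u$ the index $i_u$ = the least $i\in\{1,\dots,k\}$ such that $S_i(u)$ has no $\alpha$-gap, or $i_u=k$ if there is no such $i$; set $N_\alpha(u)=S_{i_u}(u)$ and $N_\alpha=\{(u,v): v\in N_\alpha(u)\}$. Let $E_\alpha=\{\{u,v\}: (u,v)\in N_\alpha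 \text{ or } (v,u)\in N_\alpha\}$ (the symmetric closure of $N_\alpha$) and $G_\alpha=(V,E_\alpha)$. Each node $u$ has a distinct integer identifier $\mathrm{ID}_u$. The edge ID of $\{u,v\}$ is the triple $\mathrm{eid}(u,v)=(d(u,v),\max(\mathrm{ID}_u,\mathrm{ID}_v),\min(\mathrm{ID}_u,\mathrm{ID}_v))$, and edge IDs are compared lexicographically. An edge $\{u,v\}\in E_\alpha$ is redundant if, for one of its endpoints, say $u$, there is $w\in V$ with $\{u,w\}\in E_\alpha$, $\angle vuw<\pi/3$, and $\mathrm{eid}(u,v)>\mathrm{eid}(u,w)$. *)

(* Defs.v *)
From Stdlib Require Import Reals Lra List ZArith Relations.
Open Scope R_scope.

Definition point : Type := (R * R)%type.

Definition dist (p q : point) : R :=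
  sqrt ((fst p - fst q) ^ 2 + (snd p - snd q) ^ 2).

Definition angle (v u w : point) : R :=
  acos (((fst v - fst u) * (fst w - fst u) + (snd v - snd u) * (snd w - snd u))
        / (dist u v * dist u w)).

Definition in_cone (u : point) (theta alpha : R) (p : point) : Prop :=
  exists t phi, 0 <= t /\ theta - alpha / 2 <= phi <= theta + alpha / 2 /\
    p = (fst u + t * cos phi, snd u + t * sin phi).

Definition has_gap (alpha : R) (u : point) (S : point -> Prop) : Prop :=
  exists theta, forall p, S p -> ~ in_cone u theta alpha p.

Section CBTC.
Variables (V : list point) (r : nat -> R) (k : nat) (alpha : R).

Definition Sball (i : nat) (u : point) (v : point) : Prop :=
  In v V /\ v <> u /\ dist u v <= r i.

Definition is_iu (u : point) (i : nat) : Prop :=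
  (1 <= i <= k)%nat /\
  ((~ has_gap alpha u (Sball i u) /\
    forall j, (1 <= j < i)%nat -> has_gap alpha u (Sball j u))
   \/ (i = k /\ forall j, (1 <= j <= k)%nat -> has_gap alpha u (Sball j u))).

Definition Nalpha (u v : point) : Prop :=
  In u V /\ exists i, is_iu u i /\ Sball i u v.

Definition Ealpha (u v : point) : Prop := Nalpha u v \/ Nalpha v u.

Variable ID : point -> Z.

Definition eid_gt (u v u' v' : point) : Prop :=
  dist u v > dist u' v' \/
  (dist u v = dist u' v' /\
   ((Z.max (ID u) (ID v) > Z.max (ID u') (ID v'))%Z \/
    (Z.max (ID u) (ID v) = Z.max (ID u') (ID v') /\
     (Z.min (ID u) (ID v) > Z.min (ID u') (ID v'))%Z))).

Definition redundant_at (u v : point) : Prop :=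
  exists w, In w V /\ Ealpha u w /\ angle v u w < PI / 3 /\ eid_gt u v u w.

Definition redundant (u v : point) : Prop :=
  Ealpha u v /\ (redundant_at u v \/ redundant_at v u).

Definition Enr (u v : point) : Prop := Ealpha u v /\ ~ redundant u v.

End CBTC.

Definition GR_edge (V : list point) (Rmax : R) (u v : point) : Prop :=
  In u V /\ In v V /\ u <> v /\ dist u v <= Rmax.

Definition connected_in (E : point -> point -> Prop) (u v : point) : Prop :=
  clos_refl_trans point E u v.

(* Main.v *)
Require Import Defs.
From Stdlib Require Import Reals List ZArith.
From Stdlib Require Import Lra Psatz Classical ClassicalEpsilon Relations.
Require Import Defs.
Open Scope R_scope.
Lemma h3 (p q e : R) : 0 <= p -> 0 <= q -> e <= 0 -> p*(q*e) <= 0.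
Proof. intros. assert (q*e <= 0) by nra. nra. Qed.

Lemma h3' (q e : R) : 0 <= q -> e <= 0 -> q*e <= 0.
Proof. intros; nra. Qed.

Lemma fin (d r s a b C : R) : 0 < d -> 2*d*a <= r -> r < d -> 2*d*b <= s -> s < d ->
  0 < a -> 0 < b -> C < 0 ->
  1 - 2*b + 4*a*C <= 0 -> 1 - 2*a + 4*b*C <= 0 -> 1 - a - b + C <= 0 ->
  r*(r - 2*d*a) + s*(s-2*d*b) + 2*C*r*s < 0.
Proof.
  intros.
  assert (E1: r*(r-2*d*a) <= d*(r - 2*d*a)) by nra.
  assert (E2: s*(s-2*d*b) <= d*(s - 2*d*b)) by nra.
  set (X := d*(1-2*a)). set (Y := d*(1-2*b)).
  assert (HX: 0 < X) by (unfold X; nra). assert (HY: 0 < Y) by (unfold Y; nra).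
  set (l := (r - 2*d*a)/X). set (m := (s - 2*d*b)/Y).
  assert (Hl: 0 <= l < 1).
  { unfold l; split. apply Rmult_le_pos; [lra| left; apply Rinv_0_lt_compat; lra].
    apply (Rmult_lt_reg_r X); auto. unfold Rdiv; rewrite Rmult_assoc, Rinv_l; unfold X in *; lra. }
  assert (Hm: 0 <= m < 1).
  { unfold m; split. apply Rmult_le_pos; [lra| left; apply Rinv_0_lt_compat; lra].
    apply (Rmult_lt_reg_r Y); auto. unfold Rdiv; rewrite Rmult_assoc, Rinv_l; unfold Y in *; lra. }
  assert (Er: r = l*X + 2*d*a) by (unfold l; field; lra).
  assert (Es: s = m*Y + 2*d*b) by (unfold m; field; lra).
  set (G00 := 8*C*d*d*a*b). set (G10 := d*d*(1-2*a+4*b*C)). set (G01 := d*d*(1-2*b+4*a*C)).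
  set (G11 := 2*d*d*(1-a-b+C)).
  assert (Id: d*(r - 2*d*a) + d*(s-2*d*b) + 2*C*r*s =
     (1-l)*(1-m)*G00 + l*(1-m)*G10 + (1-l)*m*G01 + l*m*G11).
  { rewrite Er, Es. unfold G00, G10, G01, G11, X, Y. ring. }
  assert (T1: (1-l)*(1-m)*G00 < 0).
  { assert (0 < (1-l)*(1-m)) by nra. unfold G00.
    assert (0 < d*d*a*b) by (repeat apply Rmult_lt_0_compat; lra).
    assert (0 < (1-l)*(1-m)*(d*d*a*b)) by (apply Rmult_lt_0_compat; lra).
    replace ((1 - l) * (1 - m) * (8 * C * d * d * a * b)) with ((8*C)*((1-l)*(1-m)*(d*d*a*b))) by ring. nra. }
  assert (T2: l*(1-m)*G10 <= 0).
  { unfold G10. rewrite Rmult_assoc. apply h3; nra. }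
  assert (T3: (1-l)*m*G01 <= 0).
  { unfold G01. rewrite Rmult_assoc. apply h3; nra. }
  assert (T4: l*m*G11 <= 0).
  { unfold G11. rewrite Rmult_assoc. apply h3; nra. }
  lra.
Qed.

Lemma sc (x : R) : sin x * sin x + cos x * cos x = 1.
Proof. pose proof (sin2_cos2 x). unfold Rsqr in H. lra. Qed.

Lemma cos_le_dec (x y : R) : 0 <= x -> x <= y -> y <= PI -> cos y <= cos x.
Proof. intros. destruct (Req_dec x y). subst; lra. left; apply cos_decreasing_1; lra. Qed.

Lemma gt_PI3 (t : R) : 0 <= t <= PI -> cos t < 1/2 -> PI/3 < t.
Proof.
  intros Ht Hc. destruct (Rlt_le_dec (PI/3) t) as [|Hle]; auto.
  pose proof PI_RGT_0. pose proof (cos_le_dec t (PI/3)) as K. rewrite cos_PI3 in K. lra.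
Qed.

Lemma cos_2tp (t p : R) : 0 <= t -> 0 <= p -> PI/3 < t -> PI/3 < p -> t < PI/2 -> t + p <= 5*PI/6 ->
  1 - 2*cos p + 4*cos t*cos (t+p) <= 0.
Proof.
  intros.
  assert (Id: 4*cos t*cos (t+p) = 2*(cos (t + (t+p)) + cos p)).
  { assert (Hp: cos p = cos (t+p) * cos t + sin (t+p) * sin t) by (rewrite <- cos_minus; f_equal; ring).
    rewrite Hp, (cos_plus t (t+p)). ring. }
  rewrite Id.
  assert (cos (t + (t+p)) <= -(1/2)).
  { replace (t + (t+p)) with ((t + p + t - PI) + PI) by ring. rewrite neg_cos.
    pose proof PI_RGT_0. pose proof (cos_le_dec (t+p+t-PI) (PI/3)) as K. rewrite cos_PI3 in K. lra. }
  lra.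
Qed.

Lemma core (d r s t p : R) : 0 < d -> 0 < r < d -> 0 < s < d -> 0 <= t <= PI -> 0 <= p <= PI ->
  t + p <= 5*PI/6 ->
  (r*cos t - d)^2 + (r*sin t)^2 >= d^2 ->
  (d - s*cos p)^2 + (s*sin p)^2 >= d^2 ->
  (r*cos t + s*cos p - d)^2 + (r*sin t - s*sin p)^2 < d^2.
Proof.
  intros Hd Hr Hs Ht Hp Htp H1 H2.
  pose proof (sc t) as St. pose proof (sc p) as Sp. pose proof PI_RGT_0 as HPI.
  assert (Ha: 2*d*cos t <= r) by nra.
  assert (Hb: 2*d*cos p <= s) by nra.
  assert (T3: PI/3 < t) by (apply gt_PI3; nra).
  assert (P3: PI/3 < p) by (apply gt_PI3; nra).
  assert (Ca: 0 < cos t) by (apply cos_gt_0; lra).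
  assert (Cb: 0 < cos p) by (apply cos_gt_0; lra).
  assert (CC: cos (t+p) < 0) by (apply cos_lt_0; lra).
  pose proof (cos_2tp t p ltac:(lra) ltac:(lra) ltac:(lra) ltac:(lra) ltac:(lra) ltac:(lra)) as K1.
  pose proof (cos_2tp p t ltac:(lra) ltac:(lra) ltac:(lra) ltac:(lra) ltac:(lra) ltac:(lra)) as K2.
  rewrite (Rplus_comm p t) in K2.
  assert (K3: 1 - cos t - cos p + cos (t+p) <= 0).
  { rewrite cos_plus.
    assert (0 <= sin t) by (apply sin_ge_0; lra).
    assert (0 <= sin p) by (apply sin_ge_0; lra).
    assert ((1 - cos t)*(1-cos p) <= sin t * sin p).
    { apply Rsqr_incr_0_var. unfold Rsqr. 
      replace (sin t * sin p * (sin t * sin p)) with ((sin t * sin t) * (sin p * sin p)) by ring.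
      replace (sin t * sin t) with (1 - cos t * cos t) by lra.
      replace (sin p * sin p) with (1 - cos p * cos p) by lra.
      pose proof (COS_bound t). pose proof (COS_bound p).
      assert (0 <= (1 - cos t)*(1-cos p)) by nra.
      assert ((1 - cos t)*(1-cos p) <= (1 + cos t)*(1+cos p)) by nra.
      replace ((1 - cos t * cos t) * (1 - cos p * cos p)) with (((1 - cos t)*(1-cos p))*((1 + cos t)*(1+cos p))) by ring.
      apply Rmult_le_compat_l; lra. nra. }
    nra. }
  pose proof (fin d r s (cos t) (cos p) (cos (t+p)) Hd Ha (proj2 Hr) Hb (proj2 Hs) Ca Cb CC K1 K2 K3) as F.
  rewrite cos_plus in F.
  nra.
Qed.

Definition pang (x y : R) : R :=
  if Rlt_dec y 0 then - acos (x / sqrt (x*x+y*y)) else acos (x / sqrt (x*x+y*y)).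

Lemma pang_spec (x y : R) : x*x + y*y <> 0 ->
  -PI < pang x y <= PI /\ x = sqrt (x*x+y*y) * cos (pang x y) /\ y = sqrt (x*x+y*y) * sin (pang x y).
Proof.
  intros Hnz. set (r := sqrt (x*x+y*y)).
  assert (Hr: 0 < r) by (unfold r; apply sqrt_lt_R0; nra).
  assert (Hr2: r*r = x*x+y*y) by (unfold r; apply sqrt_sqrt; nra).
  set (c := x / r).
  assert (Hxc: x = r * c) by (unfold c; field; lra).
  assert (Hc: -1 <= c <= 1).
  { split; apply (Rmult_le_reg_l r); try lra; rewrite <- Hxc; nra. }
  assert (Hs: sqrt (1 - c*c) = Rabs y / r).
  { rewrite <- (sqrt_Rsqr (Rabs y / r)).
    f_equal. unfold Rsqr.
    assert (Ey: Rabs y * Rabs y = y*y) by (destruct (Rcase_abs y); [rewrite Rabs_left|rewrite Rabs_pos_eq]; lra).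
    replace (Rabs y / r * (Rabs y / r)) with ((Rabs y * Rabs y) / (r*r)) by (field; lra).
    rewrite Ey, Hr2. unfold c. replace (x/r*(x/r)) with (x*x/(r*r)) by (field; lra). rewrite Hr2. field. auto.
    apply Rmult_le_pos; [apply Rabs_pos| left; apply Rinv_0_lt_compat; lra]. }
  pose proof PI_RGT_0.
  unfold pang; fold r; fold c. destruct (Rlt_dec y 0) as [Hy|Hy].
  - assert (-1 < c).
    { destruct (proj1 Hc); auto. exfalso. assert (x = -r) by (rewrite Hxc; rewrite <- H0; ring).
      nra. }
    assert (c < 1).
    { destruct (proj2 Hc); auto. exfalso. assert (x = r) by (rewrite Hxc; rewrite H1; ring). nra. }
    pose proof (acos_bound_lt c ltac:(lra)).
    rewrite <- cos_sym, sin_antisym, cos_acos, sin_acos by lra. unfold Rsqr; rewrite Hs.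
    rewrite Rabs_left by lra. split; [|split]. lra. auto. field. lra.
  - pose proof (acos_bound c).
    rewrite cos_acos, sin_acos by lra. unfold Rsqr; rewrite Hs.
    rewrite Rabs_pos_eq by lra. split; [|split]. lra. auto. field. lra.
Qed.

Lemma count_lt {A} (L : list A) (p q : A -> bool) :
  (forall x, In x L -> p x = true -> q x = true) ->
  (exists x, In x L /\ q x = true /\ p x = false) ->
  (length (filter p L) < length (filter q L))%nat.
Proof.
  induction L as [|a L IH]; intros H [x [Hx [Hq Hp]]]; [destruct Hx|].
  assert (Hle: forall L', (forall x, In x L' -> p x = true -> q x = true) ->
     (length (filter p L') <= length (filter q L'))%nat).
  { induction L' as [|b L' IH']; intros H'; simpl; auto.
    destruct (p b) eqn:E1; destruct (q b) eqn:E2; simpl.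
    - apply le_n_S, IH'; intros; apply H'; simpl; auto.
    - rewrite (H' b (or_introl eq_refl) E1) in E2; discriminate.
    - apply le_S, IH'; intros; apply H'; simpl; auto.
    - apply IH'; intros; apply H'; simpl; auto. }
  simpl. destruct Hx as [<-|Hx].
  - rewrite Hp, Hq. simpl. apply le_n_S, Hle; intros; apply H; simpl; auto.
  - assert (IH2 : (length (filter p L) < length (filter q L))%nat).
    { apply IH. intros; apply H; simpl; auto. exists x; auto. }
    destruct (p a) eqn:E1; destruct (q a) eqn:E2; simpl; try lia.
    rewrite (H a (or_introl eq_refl) E1) in E2; discriminate.
Qed.

Definition bdec (P : Prop) : bool := if excluded_middle_informative P then true else false.
Lemma bdec_true (P : Prop) : bdec P = true <-> P.
Proof. unfold bdec; destruct (excluded_middle_informative P); split; intros; auto; discriminate || contradiction. Qed.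
Lemma bdec_false (P : Prop) : bdec P = false <-> ~ P.
Proof. unfold bdec; destruct (excluded_middle_informative P); split; intros; auto; discriminate || contradiction. Qed.

Lemma wf_list {A} (L : list A) (lt : A -> A -> Prop)
  (Htr : forall a b c, lt a b -> lt b c -> lt a c) (Hir : forall a, ~ lt a a)
  (P : A -> Prop) :
  (forall a, In a L -> (forall b, In b L -> lt b a -> P b) -> P a) ->
  forall a, In a L -> P a.
Proof.
  intros H.
  set (mu := fun a => length (filter (fun c => bdec (lt c a)) L)).
  assert (K: forall n a, (mu a < n)%nat -> In a L -> P a).
  { induction n; intros a Ha Hin; [lia|].
    apply H; auto. intros b Hb Hba. apply IHn; auto.
    assert (mu b < mu a)%nat; [|lia].
    apply count_lt.
    - intros x _ Hx; cbv beta in *; apply (proj1 (bdec_true _)) in Hx; apply (proj2 (bdec_true _)); exact (Htr _ _ _ Hx Hba).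
    - exists b. cbv beta. split; auto. split. apply (proj2 (bdec_true _)); auto. apply (proj2 (bdec_false _)); apply Hir. }
  intros a Ha. apply (K (S (mu a))); auto.
Qed.

Lemma list_min {A} (l : list A) (P : A -> Prop) (f : A -> R) :
  (exists x, In x l /\ P x) -> exists x, In x l /\ P x /\ forall y, In y l -> P y -> f x <= f y.
Proof.
  induction l as [|a l IH]; intros [x [Hx HP]]; [destruct Hx|].
  destruct (classic (exists x, In x l /\ P x)) as [Hex|Hn].
  - destruct (IH Hex) as [m [Hm [HPm Hmin]]].
    destruct (classic (P a /\ f a <= f m)) as [[HPa Ha]|Hna].
    + exists a. split; [left; auto|]. split; auto. intros y [<-|Hy] HPy; [lra|].
      specialize (Hmin y Hy HPy); lra.
    + exists m. split; [right; auto|]. split; auto. intros y [<-|Hy] HPy; auto.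
      apply Rnot_lt_le. intro. apply Hna; split; auto; lra.
  - exists a. destruct Hx as [<-|Hx]; [|exfalso; apply Hn; eauto].
    split; [left; auto|]. split; auto. intros y [<-|Hy] HPy; [lra|]. exfalso; apply Hn; eauto.
Qed.


Lemma dist_sq (p q : point) : dist p q * dist p q = (fst p - fst q)*(fst p - fst q) + (snd p - snd q)*(snd p - snd q).
Proof. unfold dist. rewrite sqrt_sqrt by (apply Rplus_le_le_0_compat; apply pow2_ge_0). ring. Qed.
Lemma dist_nonneg p q : 0 <= dist p q.
Proof. unfold dist; apply sqrt_pos. Qed.
Lemma dist_sym p q : dist p q = dist q p.
Proof. unfold dist; f_equal; ring. Qed.
Lemma pt_eq (p q : point) : fst p = fst q -> snd p = snd q -> p = q.
Proof. destruct p, q; simpl; intros; subst; auto. Qed.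
Lemma sq0 (a b : R) : a*a + b*b = 0 -> a = 0 /\ b = 0.
Proof. intros H. apply Rplus_sqr_eq_0. unfold Rsqr. auto. Qed.

Lemma dist_pos p q : p <> q -> 0 < dist p q.
Proof.
  intros H. destruct (dist_nonneg p q) as [|E]; auto. exfalso. apply H.
  pose proof (dist_sq p q) as E2. rewrite <- E in E2. destruct (sq0 (fst p - fst q) (snd p - snd q)) as [A B]. lra.
  apply pt_eq; lra.
Qed.

Definition fr (u v : point) : R := pang (fst v - fst u) (snd v - snd u).
Definition rx (u v p : point) : R := (fst p - fst u) * cos (fr u v) + (snd p - snd u) * sin (fr u v).
Definition ry (u v p : point) : R := - (fst p - fst u) * sin (fr u v) + (snd p - snd u) * cos (fr u v).
Definition rang (u v p : point) : R := pang (rx u v p) (ry u v p).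

Lemma fr_spec u v : u <> v ->
  fst v - fst u = dist u v * cos (fr u v) /\ snd v - snd u = dist u v * sin (fr u v).
Proof.
  intros H. unfold fr. destruct (pang_spec (fst v - fst u) (snd v - snd u)) as [_ [E1 E2]].
  { intro E. apply H. destruct (sq0 _ _ E). apply pt_eq; lra. }
  unfold dist. replace ((fst u - fst v)^2 + (snd u - snd v)^2) with
   ((fst v - fst u) * (fst v - fst u) + (snd v - snd u) * (snd v - snd u)) by ring. auto.
Qed.

Lemma rdist u v p q : dist p q * dist p q =
  (rx u v p - rx u v q)*(rx u v p - rx u v q) + (ry u v p - ry u v q)*(ry u v p - ry u v q).
Proof.
  rewrite dist_sq. unfold rx, ry. pose proof (sc (fr u v)).
  set (c := cos (fr u v)) in *. set (s := sin (fr u v)) in *.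
  transitivity (((fst p - fst q)*(fst p - fst q) + (snd p - snd q)*(snd p - snd q))*(s*s+c*c)).
  rewrite H; ring. ring.
Qed.

Lemma rx_u u v : rx u v u = 0. Proof. unfold rx; ring. Qed.
Lemma ry_u u v : ry u v u = 0. Proof. unfold ry; ring. Qed.
Lemma rx_v u v : u <> v -> rx u v v = dist u v.
Proof. intros H. destruct (fr_spec u v H) as [E1 E2]. unfold rx. rewrite E1, E2.
  pose proof (sc (fr u v)). transitivity (dist u v * (sin (fr u v) * sin (fr u v) + cos (fr u v) * cos (fr u v))); [ring|]. rewrite H0; ring. Qed.
Lemma ry_v u v : u <> v -> ry u v v = 0.
Proof. intros H. destruct (fr_spec u v H) as [E1 E2]. unfold ry. rewrite E1, E2. ring. Qed.

Lemma rang_spec u v p : p <> u ->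
  -PI < rang u v p <= PI /\ rx u v p = dist u p * cos (rang u v p) /\ ry u v p = dist u p * sin (rang u v p).
Proof.
  intros H.
  assert (Hd: sqrt (rx u v p * rx u v p + ry u v p * ry u v p) = dist u p).
  { pose proof (rdist u v p u) as E. rewrite rx_u, ry_u in E.
    rewrite dist_sym. rewrite <- sqrt_square with (x := dist p u) by apply dist_nonneg.
    f_equal. rewrite E. ring. }
  unfold rang. rewrite <- Hd. apply pang_spec.
  intro E. apply (dist_pos p u) in H. pose proof (rdist u v p u) as E2. rewrite rx_u, ry_u in E2.
  nra.
Qed.

Lemma frame_swap u v : u <> v -> cos (fr v u) = - cos (fr u v) /\ sin (fr v u) = - sin (fr u v).
Proof.
  intros H. destruct (fr_spec u v H) as [E1 E2].
  assert (H' : v <> u) by auto. destruct (fr_spec v u H') as [E3 E4].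
  rewrite dist_sym in E3, E4. pose proof (dist_pos u v H).
  split; apply (Rmult_eq_reg_l (dist u v)); lra.
Qed.

Lemma rx_swap u v p : u <> v -> rx v u p = dist u v - rx u v p.
Proof.
  intros H. destruct (frame_swap u v H) as [E1 E2]. rewrite <- (rx_v u v H).
  unfold rx. rewrite E1, E2. ring.
Qed.
Lemma ry_swap u v p : u <> v -> ry v u p = - ry u v p.
Proof.
  intros H. destruct (frame_swap u v H) as [E1 E2]. pose proof (ry_v u v H) as E.
  unfold ry in *. rewrite E1, E2. lra.
Qed.


Lemma angle_mod (a b : R) : cos a = cos b -> sin a = sin b -> exists k : Z, a = b + 2 * IZR k * PI.
Proof.
  intros Hc Hs.
  assert (H1: cos (a - b) = 1) by (rewrite cos_minus, <- Hc, <- Hs; pose proof (sc a); lra).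
  assert (H2: sin ((a - b)/2) = 0).
  { pose proof (cos_2a_sin ((a-b)/2)) as E. replace (2 * ((a - b)/2)) with (a-b) in E by field.
    assert (sin ((a - b)/2) * sin ((a - b)/2) = 0) by lra. nra. }
  destruct (sin_eq_0_0 _ H2) as [k Hk]. exists k. lra.
Qed.

Lemma window (f lo hi : R) (k : Z) : -PI < f <= PI -> -PI < lo -> hi <= PI ->
  lo <= f + 2 * IZR k * PI <= hi -> lo <= f <= hi.
Proof.
  intros Hf Hlo Hhi Hw. pose proof PI_RGT_0.
  destruct (Z.lt_trichotomy k 0) as [Hk|[Hk|Hk]].
  - assert (IZR k <= -1) by (apply IZR_le; lia). nra.
  - subst. simpl in Hw. lra.
  - assert (1 <= IZR k) by (apply IZR_le; lia). nra.
Qed.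

Lemma cone_lemma (u v : point) (alpha : R) (A : point -> Prop) (m : R) :
  u <> v -> (forall p, A p -> p <> u) -> ~ has_gap alpha u A ->
  -PI < m - alpha/2 -> m + alpha/2 <= PI ->
  exists p, A p /\ m - alpha/2 <= rang u v p <= m + alpha/2.
Proof.
  intros Huv HA Hng Hlo Hhi.
  assert (exists p, A p /\ in_cone u (fr u v + m) alpha p) as [p [Ap Hc]].
  { apply NNPP. intro Hn. apply Hng. exists (fr u v + m). intros p Ap Hc. apply Hn. eauto. }
  exists p. split; auto.
  destruct Hc as [t [ph [Ht [Hph Ep]]]].
  assert (Hpu: p <> u) by auto.
  destruct (rang_spec u v p Hpu) as [Hb [E1 E2]].
  assert (Ex: rx u v p = t * cos (ph - fr u v)) by (unfold rx; rewrite Ep, cos_minus; simpl; ring).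
  assert (Ey: ry u v p = t * sin (ph - fr u v)) by (unfold ry; rewrite Ep, sin_minus; simpl; ring).
  assert (Edt: dist u p = t).
  { pose proof (rdist u v p u) as E. rewrite rx_u, ry_u, Ex, Ey in E.
    pose proof (sc (ph - fr u v)).
    rewrite dist_sym. apply Rsqr_inj; [apply dist_nonneg | lra |]. unfold Rsqr. rewrite E.
    transitivity (t*t*(sin (ph - fr u v) * sin (ph - fr u v) + cos (ph - fr u v) * cos (ph - fr u v))); [ring|].
    rewrite H; ring. }
  assert (Htp: 0 < t) by (rewrite <- Edt; apply dist_pos; auto).
  rewrite Edt in E1, E2.
  assert (C1: cos (ph - fr u v) = cos (rang u v p)) by (apply (Rmult_eq_reg_l t); lra).
  assert (C2: sin (ph - fr u v) = sin (rang u v p)) by (apply (Rmult_eq_reg_l t); lra).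
  destruct (angle_mod _ _ C1 C2) as [k Hk].
  apply (window _ _ _ k Hb Hlo Hhi). rewrite <- Hk. lra.
Qed.

Lemma ext_lemma (V : list point) (u v : point) (alpha : R) (A : point -> Prop) :
  u <> v -> (forall p, A p -> In p V /\ p <> u) -> ~ has_gap alpha u A -> 0 < alpha < PI ->
  exists p q, A p /\ A q /\ 0 < rang u v p /\ rang u v q <= 0 /\ rang u v p - rang u v q <= alpha.
Proof.
  intros Huv HA Hng Ha. pose proof PI_RGT_0.
  assert (HA' : forall p, A p -> p <> u) by (intros; apply HA; auto).
  destruct (cone_lemma u v alpha A (PI/2) Huv HA' Hng ltac:(lra) ltac:(lra)) as [p0 [Ap0 Hp0]].
  destruct (cone_lemma u v alpha A (-(PI/2)) Huv HA' Hng ltac:(lra) ltac:(lra)) as [q0 [Aq0 Hq0]].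
  destruct (list_min V (fun p => A p /\ 0 < rang u v p) (rang u v)) as [p [_ [[Ap Hp] Hpmin]]].
  { exists p0. split. apply HA; auto. split; auto; lra. }
  destruct (list_min V (fun p => A p /\ rang u v p <= 0) (fun p => - rang u v p)) as [q [_ [[Aq Hq] Hqmax]]].
  { exists q0. split. apply HA; auto. split; auto; lra. }
  exists p, q. do 4 (split; auto).
  apply Rnot_lt_le. intro Hgt.
  destruct (rang_spec u v p (HA' p Ap)) as [Bp _].
  destruct (rang_spec u v q (HA' q Aq)) as [Bq _].
  destruct (cone_lemma u v alpha A ((rang u v p + rang u v q)/2) Huv HA' Hng ltac:(lra) ltac:(lra)) as [x [Ax Hx]].
  destruct (Rlt_le_dec 0 (rang u v x)) as [Hx0|Hx0].
  - specialize (Hpmin x (proj1 (HA x Ax)) (conj Ax Hx0)). lra.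
  - specialize (Hqmax x (proj1 (HA x Ax)) (conj Ax Hx0)). lra.
Qed.

Lemma pair_lemma (u v w t : point) :
  u <> v -> w <> u -> t <> v ->
  0 < rang u v w -> rang v u t <= 0 -> rang u v w - rang v u t <= 5*PI/6 ->
  dist u w < dist u v -> dist v t < dist u v -> dist u v <= dist w v -> dist u v <= dist t u ->
  dist w t < dist u v.
Proof.
  intros Huv Hwu Htv H1 H2 H3 H4 H5 H6 H7.
  set (d := dist u v) in *.
  assert (Hd: 0 < d) by (apply dist_pos; auto).
  destruct (rang_spec u v w Hwu) as [Bw [Xw Yw]].
  destruct (rang_spec v u t Htv) as [Bt [Xt Yt]].
  set (th := rang u v w) in *. set (ps := rang v u t) in *.
  rewrite rx_swap in Xt by auto. rewrite ry_swap in Yt by auto. fold d in Xt.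
  assert (Rxt: rx u v t = d - dist v t * cos (- ps)) by (rewrite <- cos_sym; lra).
  assert (Ryt: ry u v t = dist v t * sin (- ps)) by (rewrite sin_antisym; lra).
  assert (Pw: 0 < dist u w) by (apply dist_pos; auto).
  assert (Pt: 0 < dist v t) by (apply dist_pos; auto).
  pose proof (core d (dist u w) (dist v t) th (-ps) Hd ltac:(lra) ltac:(lra) ltac:(lra) ltac:(lra) ltac:(lra)) as K.
  pose proof (rdist u v w v) as Ewv. rewrite (rx_v u v Huv), (ry_v u v Huv) in Ewv. fold d in Ewv.
  pose proof (rdist u v t u) as Etu. rewrite rx_u, ry_u in Etu.
  pose proof (rdist u v w t) as Ewt.
  rewrite Xw, Yw in Ewv, Ewt. rewrite Rxt, Ryt in Etu, Ewt.
  assert (Q1: dist w v * dist w v >= d * d) by nra.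
  assert (Q2: dist t u * dist t u >= d * d) by nra.
  assert (dist w t * dist w t < d * d).
  { rewrite Ewt. simpl in K. 
    assert (K' := K ltac:(simpl; nra) ltac:(simpl; nra)). nra. }
  pose proof (dist_nonneg w t). nra.
Qed.


Lemma acos_lt_PI3 (c : R) : acos c < PI/3 -> 1/2 < c.
Proof.
  intros H. pose proof PI_RGT_0. apply Rnot_le_lt. intro Hc.
  destruct (Rle_dec c (-1)) as [Hm|Hm].
  - unfold acos in H. destruct (Rle_dec c (-1)); [lra|contradiction].
  - pose proof (acos_bound c). pose proof (cos_acos c ltac:(lra)).
    assert (cos (PI/3) < cos (acos c)) by (apply cos_decreasing_1; lra).
    rewrite cos_PI3 in H3. lra.
Qed.

Lemma redundant_geom (u v w : point) : angle v u w < PI/3 -> v <> u -> w <> u ->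
  dist u w <= dist u v -> dist w v < dist u v.
Proof.
  intros Ha Hv Hw Hle.
  unfold angle in Ha. apply acos_lt_PI3 in Ha.
  set (dot := (fst v - fst u) * (fst w - fst u) + (snd v - snd u) * (snd w - snd u)) in *.
  assert (Pv: 0 < dist u v) by (apply dist_pos; auto).
  assert (Pw: 0 < dist u w) by (apply dist_pos; auto).
  assert (Hd: dist u v * dist u w / 2 < dot).
  { assert (0 < dist u v * dist u w) by nra.
    apply (Rmult_lt_compat_r (dist u v * dist u w)) in Ha; auto.
    replace (dot / (dist u v * dist u w) * (dist u v * dist u w)) with dot in Ha by (field; lra). lra. }
  pose proof (dist_sq w v) as E1. pose proof (dist_sq u v) as E2. pose proof (dist_sq u w) as E3.
  assert (dist w v * dist w v < dist u v * dist u v).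
  { unfold dot in Hd. nra. }
  pose proof (dist_nonneg w v). nra.
Qed.

Lemma crt_sym (E : point -> point -> Prop) : (forall x y, E x y -> E y x) ->
  forall u v, clos_refl_trans point E u v -> clos_refl_trans point E v u.
Proof.
  intros HE u v H. induction H.
  - apply rt_step; auto.
  - apply rt_refl.
  - eapply rt_trans; eauto.
Qed.

Lemma r_mono (r : nat -> R) (k : nat) : (forall i, (1 <= i < k)%nat -> r i < r (S i)) ->
  forall i, (1 <= i <= k)%nat -> r i <= r k.
Proof.
  intros H i Hi. remember (k - i)%nat as n. revert i Hi Heqn.
  induction n; intros i Hi Heqn.
  - assert (i = k) by lia. subst; lra.
  - assert (r i < r (S i)) by (apply H; lia).
    assert (r (S i) <= r k) by (apply IHn; lia). lra.
Qed.

Lemma eid_trans ID a b c d e f : eid_gt ID a b c d -> eid_gt ID c d e f -> eid_gt ID a b e f.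
Proof. unfold eid_gt. intros H1 H2. destruct H1 as [H1|[H1 H1']]; destruct H2 as [H2|[H2 H2']].
  - left; lra. - left; lra. - left; lra.
  - right; split; [lra|]. lia. Qed.
Lemma eid_irr ID a b : ~ eid_gt ID a b a b.
Proof. unfold eid_gt. intros [H|[_ H]]; [lra|lia]. Qed.
Lemma eid_sym1 ID u v x y : eid_gt ID u v x y -> eid_gt ID v u x y.
Proof. unfold eid_gt. rewrite (dist_sym v u), (Z.max_comm (ID v)), (Z.min_comm (ID v)). auto. Qed.
Lemma eid_sym2 ID u v x y : eid_gt ID u v x y -> eid_gt ID u v y x.
Proof. unfold eid_gt. rewrite (dist_sym y x), (Z.max_comm (ID y)), (Z.min_comm (ID y)). auto. Qed.
Lemma eid_dist ID u v x y : dist x y < dist u v -> eid_gt ID u v x y.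
Proof. unfold eid_gt; intros; left; lra. Qed.
Lemma eid_le ID u v w : eid_gt ID u v u w -> dist u w <= dist u v.
Proof. unfold eid_gt; intros [H|[H _]]; lra. Qed.

Lemma least_nat (Q : nat -> Prop) : (exists n, Q n) -> exists n, Q n /\ forall m, (m < n)%nat -> ~ Q m.
Proof.
  intros [n Hn]. revert Hn. induction n as [n IH] using lt_wf_ind. intros Hn.
  destruct (classic (exists m, (m < n)%nat /\ Q m)) as [[m [Hm Qm]]|Hno].
  - apply (IH m Hm Qm).
  - exists n. split; auto. intros m Hm Qm. apply Hno; eauto.
Qed.

Lemma exists_iu V r k alpha u : (1 <= k)%nat -> exists i, is_iu V r k alpha u i.
Proof.
  intros Hk.
  destruct (classic (exists j, (1 <= j <= k)%nat /\ ~ has_gap alpha u (Sball V r j u))) as [Hex|Hno].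
  - destruct (least_nat _ Hex) as [i [[Hi Hg] Hmin]]. exists i. split; auto. left. split; auto.
    intros j Hj. apply NNPP. intro Hn. apply (Hmin j); [lia|]. split; auto; lia.
  - exists k. split; [lia|]. right. split; auto. intros j Hj. apply NNPP. intro Hn. apply Hno; eauto.
Qed.

Lemma Nalpha_props V r k alpha Rmax u v : (forall i, (1 <= i < k)%nat -> r i < r (S i)) -> r k = Rmax ->
  Nalpha V r k alpha u v -> In u V /\ In v V /\ u <> v /\ dist u v <= Rmax.
Proof.
  intros Hr HR [Hu [i [[Hi _] [Hv [Hne Hd]]]]]. pose proof (r_mono r k Hr i Hi). repeat split; auto; lra.
Qed.

Lemma Ealpha_props V r k alpha Rmax u v : (forall i, (1 <= i < k)%nat -> r i < r (S i)) -> r k = Rmax ->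
  Ealpha V r k alpha u v -> In u V /\ In v V /\ u <> v /\ dist u v <= Rmax.
Proof.
  intros Hr HR [H|H]; apply (Nalpha_props V r k alpha Rmax) in H; auto. rewrite dist_sym. intuition.
Qed.

Lemma Ealpha_sym V r k alpha u v : Ealpha V r k alpha u v -> Ealpha V r k alpha v u.
Proof. unfold Ealpha; tauto. Qed.

Lemma Enr_sym V r k alpha ID u v : Enr V r k alpha ID u v -> Enr V r k alpha ID v u.
Proof. unfold Enr, redundant, Ealpha. tauto. Qed.

Lemma no_edge_info V r k alpha Rmax u v : (forall i, (1 <= i < k)%nat -> r i < r (S i)) -> r k = Rmax ->
  (1 <= k)%nat -> In u V -> In v V -> u <> v -> dist u v <= Rmax -> ~ Nalpha V r k alpha u v ->
  exists i, (forall p, Sball V r i u p -> In p V /\ p <> u /\ dist u p < dist u v /\ Nalpha V r k alpha u p)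
     /\ ~ has_gap alpha u (Sball V r i u).
Proof.
  intros Hr HR Hk Hu Hv Huv Hd HN.
  destruct (exists_iu V r k alpha u Hk) as [i Hi].
  assert (Hlt: r i < dist u v).
  { apply Rnot_le_lt. intro. apply HN. split; auto. exists i. split; auto. split; auto. }
  exists i. split.
  - intros p [Hp [Hpu Hdp]]. repeat split; auto. lra. exists i. split; auto. split; auto.
  - destruct Hi as [_ [[Hg _]|[Hik _]]]; auto. subst i. lra.
Qed.

Lemma main_conn V ID k r Rmax alpha
  (Hk : (1 <= k)%nat)
  (Hrinc : forall i, (1 <= i < k)%nat -> r i < r (S i))
  (HrR : r k = Rmax)
  (Ha0 : 0 < alpha) (Ha1 : alpha <= 5 * PI / 6) :
  forall u v, In u V -> In v V -> dist u v <= Rmax -> connected_in (Enr V r k alpha ID) u v.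
Proof.
  pose proof PI_RGT_0 as HPI.
  set (E := Enr V r k alpha ID).
  assert (Hsym: forall x y, connected_in E x y -> connected_in E y x).
  { intros x y. apply crt_sym. intros; apply Enr_sym; auto. }
  assert (W := wf_list (list_prod V V) (fun a b => eid_gt ID (fst b) (snd b) (fst a) (snd a))
    ltac:(intros a b c H1 H2; simpl in *; exact (eid_trans _ _ _ _ _ _ _ H2 H1)) ltac:(intros a; apply eid_irr)
    (fun a => dist (fst a) (snd a) <= Rmax -> connected_in E (fst a) (snd a))).
  intros u0 v0 Hu0 Hv0 Hd0.
  refine (W _ (u0, v0) _ Hd0); [|apply in_prod; auto].
  clear u0 v0 Hu0 Hv0 Hd0.
  intros [u v] Huv IH Hd. simpl in *.
  apply in_prod_iff in Huv. destruct Huv as [Hu Hv].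
  assert (IH2 : forall x y, In x V -> In y V -> eid_gt ID u v x y -> dist x y <= Rmax -> connected_in E x y).
  { intros x y Hx Hy Hxy Hdx. apply (IH (x, y)); auto. apply in_prod; auto. }
  clear IH.
  assert (IHd : forall x y, In x V -> In y V -> dist x y < dist u v -> connected_in E x y).
  { intros x y Hx Hy Hxy. apply IH2; auto. apply eid_dist; auto. lra. }
  destruct (classic (u = v)) as [<-|Hne]; [apply rt_refl|].
  destruct (classic (Ealpha V r k alpha u v)) as [HE|HnE].
  - destruct (classic (redundant V r k alpha ID u v)) as [Hred|Hnr].
    2:{ apply rt_step. split; auto. }
    destruct Hred as [_ [[w [Hw [Huw [Ha He]]]]|[w [Hw [Hvw [Ha He]]]]]].
    + destruct (Ealpha_props V r k alpha Rmax u w Hrinc HrR Huw) as [_ [_ [Hnw Hdw]]].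
      apply rt_trans with w.
      * apply IH2; auto.
      * apply IHd; auto. apply redundant_geom; auto. eapply eid_le; eauto.
    + destruct (Ealpha_props V r k alpha Rmax v w Hrinc HrR Hvw) as [_ [_ [Hnw Hdw]]].
      apply Hsym. apply rt_trans with w.
      * apply IH2; auto. apply eid_sym1; auto.
      * apply IHd; auto. rewrite (dist_sym u v). apply redundant_geom; auto. eapply eid_le; eauto.
  - assert (HnU: ~ Nalpha V r k alpha u v) by (intro; apply HnE; left; auto).
    assert (HnV: ~ Nalpha V r k alpha v u) by (intro; apply HnE; right; auto).
    destruct (no_edge_info V r k alpha Rmax u v Hrinc HrR Hk Hu Hv Hne Hd HnU) as [iu [HA HgA]].
    assert (Hne' : v <> u) by auto.
    rewrite dist_sym in Hd.
    destruct (no_edge_info V r k alpha Rmax v u Hrinc HrR Hk Hv Hu Hne' Hd HnV) as [iv [HB HgB]].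
    rewrite dist_sym in Hd. rewrite (dist_sym v u) in HB.
    destruct (classic (exists p, Sball V r iu u p /\ dist p v < dist u v)) as [[p [Ap Hpv]]|Hgu].
    { destruct (HA p Ap) as [Hp [Hpu [Hdp _]]]. apply rt_trans with p; apply IHd; auto. }
    destruct (classic (exists p, Sball V r iv v p /\ dist p u < dist u v)) as [[p [Ap Hpu']]|Hgv].
    { destruct (HB p Ap) as [Hp [Hpu [Hdp _]]]. apply Hsym. apply rt_trans with p; apply IHd; auto;
      rewrite dist_sym; auto. }
    destruct (ext_lemma V u v alpha (Sball V r iu u) Hne ltac:(intros p Ap; destruct (HA p Ap) as [? [? _]]; auto) HgA ltac:(lra))
      as [p [q [Ap [Aq [Hp [Hq Hpq]]]]]].
    destruct (ext_lemma V v u alpha (Sball V r iv v) Hne' ltac:(intros x Ax; destruct (HB x Ax) as [? [? _]]; auto) HgB ltac:(lra))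
      as [p' [q' [Ap' [Aq' [Hp' [Hq' Hpq']]]]]].
    destruct (HA p Ap) as [Pp [Ppu [Pdp _]]]. destruct (HA q Aq) as [Qp [Qpu [Qdp _]]].
    destruct (HB p' Ap') as [Pp' [Ppu' [Pdp' _]]]. destruct (HB q' Aq') as [Qp' [Qpu' [Qdp' _]]].
    assert (Ng1 : forall x, Sball V r iu u x -> dist u v <= dist x v).
    { intros x Ax. apply Rnot_lt_le. intro. apply Hgu; eauto. }
    assert (Ng2 : forall x, Sball V r iv v x -> dist u v <= dist x u).
    { intros x Ax. apply Rnot_lt_le. intro. apply Hgv; eauto. }
    destruct (Rle_dec (rang u v p - rang v u q') alpha) as [C1|C1].
    + assert (K: dist p q' < dist u v).
      { apply pair_lemma; auto; try lra. }
      apply rt_trans with p; [apply IHd; auto|].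
      apply rt_trans with q'; apply IHd; auto. rewrite dist_sym; auto.
    + assert (K: dist p' q < dist v u).
      { apply pair_lemma; auto; try lra; rewrite (dist_sym v u); auto. }
      rewrite (dist_sym v u) in K.
      apply Hsym.
      apply rt_trans with p'; [apply IHd; auto; rewrite dist_sym; auto|].
      apply rt_trans with q; apply IHd; auto. rewrite dist_sym; auto.
Qed.


Theorem theorem5
  (V : list point) (ID : point -> Z) (k : nat) (r : nat -> R) (Rmax alpha : R)
  (HV : NoDup V)
  (HID : forall p q, In p V -> In q V -> ID p = ID q -> p = q)
  (Hk : (1 <= k)%nat)
  (Hr1 : 0 < r 1%nat)
  (Hrinc : forall i, (1 <= i < k)%nat -> r i < r (S i))
  (HrR : r k = Rmax)
  (Ha0 : 0 < alpha) (Ha1 : alpha <= 5 * PI / 6) :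
  (forall u v, In u V -> In v V ->
     (connected_in (Enr V r k alpha ID) u v <-> connected_in (GR_edge V Rmax) u v))
  /\
  (forall u v, redundant V r k alpha ID u v ->
     connected_in (Enr V r k alpha ID) u v).
Proof.
  pose proof (main_conn V ID k r Rmax alpha Hk Hrinc HrR Ha0 Ha1) as M.
  split.
  - intros u v _ _. split.
    + intros H. induction H.
      * apply rt_step. destruct H as [HE _].
        destruct (Ealpha_props V r k alpha Rmax x y Hrinc HrR HE) as [A [B [C D]]].
        repeat split; auto.
      * apply rt_refl.
      * eapply rt_trans; eauto.
    + intros H. induction H.
      * destruct H as [A [B [C D]]]. apply M; auto.
      * apply rt_refl.
      * eapply rt_trans; eauto.
  - intros u v [HE _].
    destruct (Ealpha_props V r k alpha Rmax u v Hrinc HrR HE) as [A [B [C D]]].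
    apply M; auto.
Qed.
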